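(* Let $u,v$ be planar rooted trees with $|u|=m$ and $|v|=n$, and write $[p]_0=\{0,1,\dots,p\}$. (1) For every hash product $u\# v$ of $u$ with $v$ and every $k\in[m+n]_0$, there exists $(i,j)\in[m]_0\times[n]_0$ and hash products $u_{[1,i]}\# v_{[1,j]}$ and $u_{[i+1,m]}\# v_{[j+1,n]}$ such that $$(u\# v)_{[1,k]}\otimes(u\# v)_{[k+1,m+n]}=(u_{[1,i]}\# v_{[1,j]})\otimes(u_{[i+1,m]}\# v_{[j+1,n]}).$$ (2) Conversely, for every $(i,j)\in[m]_0\times[n]_0$ and all hash products $u_{[1,i]}\# v_{[1,j]}$ and $u_{[i+1,m]}\# v_{[j+1,n]}$, there is a hash product $u\# v$ such that $$(u_{[1,i]}\# v_{[1,j]})\otimes(u_{[i+1,m]}\# v_{[j+1,n]})=(u\# v)_{[1,i+j]}\otimes(u\# v)_{[i+j+1,m+n]}.$$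
   Context: A tree is a finite planar rooted tree; its degree is the number of non-root nodes; $\odot$ is the one-node tree. Nodes $N(t)$ are ordered by depth-first post-order (subtrees left to right recursively, then the node; root maximal); write $u_1<\dots<u_n$ for the non-root nodes of a tree of degree $n$. For a set $A$ of non-root nodes, $t_A$ is obtained by deleting non-root nodes outside $A$ (children of a deleted node attached in order to its parent in its place); $t_{[i,j]}=t_{\{u_h,\dots,u_k\}}$ if $i\le j$ and $[i,j]\cap[n]=[h,k]\ne\emptyset$, else $t_{[i,j]}=\odot$. A partition of a tree $v$ of degree $n\ge 1$ is an ordered tuple $(v_{[n_0+1,n_1]},\dots,v_{[n_{k-1}+1,n_k]})$ with $0=n_0<\dots<n_k=n$. For a partition $P=(v_1,\dots,v_k)$ of $v$ and a tree $t$, $I(P,t)$ is the set of maps $f$ from the blocks to $N(t)$ with $f(v_1)<\dots<f(v_k)$. The hash product $t\#_{P,f}v$ is obtained from $t$ by identifying the root of each $v_i$ with $f(v_i)$, the children of the root of $v_i$ becoming children of $f(v_i)$ placed to the right of its original children. ''A hash product $t\# v$'' means $t\#_{P,f}v$ for some such $(P,f)$; by convention the only hash product $t\#\odot$ is $t$ (and for $t=\odot$ the hash products $\odot\# v$ equal $v$). *)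

(* Defs.v *)
From mathcomp Require Import all_boot.
Set Implicit Arguments. Unset Strict Implicit. Unset Printing Implicit Defensive.

Inductive tree : Type := Node of seq tree.

Definition odot : tree := Node [::].

Definition children (t : tree) : seq tree := let: Node ts := t in ts.

Fixpoint tsize (t : tree) : nat :=
  let: Node ts := t in (sumn (map tsize ts)).+1.

Definition deg (t : tree) : nat := (tsize t).-1.

(* Nodes are identified with their 0-based post-order index: the subtree t
   whose first (post-order) node has index [off] occupies indices
   off, ..., off + tsize t - 1, its root being the last one.  For a tree of
   degree n, the non-root node u_l (1 <= l <= n) has index l-1 and the root
   has index n. *)

(* restr P off t : the forest replacing the subtree t (starting at index off)
   after deleting its nodes whose index does not satisfy P; children of a
   deleted node are attached in order in its place. *)
Fixpoint restr (P : nat -> bool) (off : nat) (t : tree) {struct t} : seq tree :=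
  let: Node ts := t in
  let fix go (o : nat) (ts : seq tree) : seq tree :=
    match ts with
    | [::] => [::]
    | t' :: ts' => restr P o t' ++ go (o + tsize t') ts'
    end in
  let kids := go off ts in
  if P (off + sumn (map tsize ts)) then [:: Node kids] else kids.

Definition restrict (A : nat -> bool) (t : tree) : tree :=
  match restr (fun p => (p == deg t) || A p) 0 t with
  | [:: r] => r
  | _ => odot
  end.

(* t_[i,j] (1-based node numbers u_1 < ... < u_n) *)
Definition tint (t : tree) (i j : nat) : tree :=
  let n := deg t in
  let h := maxn i 1 in
  let k := minn j n in
  if (i <= j) && (h <= k)
  then restrict (fun p => (h <= p.+1) && (p.+1 <= k)) t
  else odot.

(* A partition of v of degree n >= 1 is given by cut points
   ns = [:: n_1; ...; n_k] with 0 = n_0 < n_1 < ... < n_k = n. *)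
Definition valid_cuts (n : nat) (ns : seq nat) : bool :=
  [&& 0 < n, sorted ltn (0 :: ns) & last 0 ns == n].

Definition blocks (v : tree) (ns : seq nat) : seq tree :=
  pairmap (fun a b => tint v a.+1 b) 0 ns.

(* f in I(P,t): f(v_1) < ... < f(v_k), nodes of t given by post-order index *)
Definition valid_map (t : tree) (k : nat) (fs : seq nat) : bool :=
  [&& size fs == k, sorted ltn fs & all (fun p => p < tsize t) fs].

Fixpoint graft (g : nat -> seq tree) (off : nat) (t : tree) {struct t} : tree :=
  let: Node ts := t in
  let fix go (o : nat) (ts : seq tree) : seq tree :=
    match ts with
    | [::] => [::]
    | t' :: ts' => graft g o t' :: go (o + tsize t') ts'
    end in
  Node (go off ts ++ g (off + sumn (map tsize ts))).

(* t #_{P,f} v : the root of the i-th block is identified with node f(v_i),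
   its children becoming the rightmost children of f(v_i). *)
Definition hash_prod (t v : tree) (ns fs : seq nat) : tree :=
  let bl := blocks v ns in
  graft (fun p => let i := index p fs in
                  if i < size fs then children (nth odot bl i) else [::]) 0 t.

Definition is_hash (t v w : tree) : Prop :=
  (deg v = 0 /\ w = t) \/
  exists ns fs, valid_cuts (deg v) ns /\ valid_map t (size ns) fs /\
                w = hash_prod t v ns fs.

(* Main.v *)
Require Import Defs.
From mathcomp Require Import all_boot.
From mathcomp Require Import all_boot zify.
Import Defs.
Set Implicit Arguments. Unset Strict Implicit. Unset Printing Implicit Defensive.

Definition fsize (F : seq tree) : nat := sumn (map tsize F).

Fixpoint preT (t : tree) (k : nat) {struct t} : seq tree :=
  let: Node C := t in
  let fix go k F := match F with
    | [::] => [::]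
    | t' :: F' => if tsize t' <= k then t' :: go (k - tsize t') F' else preT t' k
    end in go k C.
Definition pre k F := preT (Node F) k.

Fixpoint sufT (t : tree) (k : nat) {struct t} : seq tree :=
  let: Node C := t in
  let fix go k F := match F with
    | [::] => [::]
    | t' :: F' => if tsize t' <= k then go (k - tsize t') F' else Node (sufT t' k) :: F'
    end in go k C.
Definition suf k F := sufT (Node F) k.

Lemma tsizeE C : tsize (Node C) = (fsize C).+1. Proof. by []. Qed.
Lemma fsize_cons t F : fsize (t :: F) = tsize t + fsize F. Proof. by []. Qed.

Lemma fsize_cons0 : fsize [::] = 0. Proof. by []. Qed.
Lemma forest_ind (P : seq tree -> Prop) :
  P [::] -> (forall C F, P C -> P F -> P (Node C :: F)) -> forall F, P F.
Proof.
move=> H0 HS F.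
suff: forall n F, fsize F < n -> P F by apply; apply: ltnSn.
elim=> [|n IH] [|t F'] //= Hs; case: t Hs => C Hs.
rewrite fsize_cons tsizeE in Hs.
apply: HS; apply: IH; lia.
Qed.

Lemma preE k C F : pre k (Node C :: F) =
  if (fsize C).+1 <= k then Node C :: pre (k - (fsize C).+1) F else pre k C.
Proof. by []. Qed.
Lemma sufE k C F : suf k (Node C :: F) =
  if (fsize C).+1 <= k then suf (k - (fsize C).+1) F else Node (suf k C) :: F.
Proof. by []. Qed.

Lemma tsize_gt0 t : 0 < tsize t. Proof. by case: t. Qed.

Lemma fsize0 F : fsize F = 0 -> F = [::].
Proof. case: F => // t F; rewrite fsize_cons; have := tsize_gt0 t; lia. Qed.

Lemma fsize_pre k F : fsize (pre k F) = minn k (fsize F).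
Proof.
elim/forest_ind: F k => [|C F IHC IHF] k; first by rewrite minn0.
rewrite preE; case: ifP => h; rewrite ?fsize_cons ?tsizeE ?IHF ?IHC; lia.
Qed.

Lemma fsize_suf k F : fsize (suf k F) = fsize F - k.
Proof.
elim/forest_ind: F k => [|C F IHC IHF] k //.
rewrite sufE; case: ifP => h; rewrite ?fsize_cons ?tsizeE ?IHF ?IHC; lia.
Qed.

Lemma pre_nil k : pre k [::] = [::]. Proof. by []. Qed.
Lemma suf_nil k : suf k [::] = [::]. Proof. by []. Qed.

Lemma pre_full k F : fsize F <= k -> pre k F = F.
Proof.
elim/forest_ind: F k => [|C F IHC IHF] k //.
rewrite preE fsize_cons tsizeE => h; rewrite ifT; last lia.
by rewrite IHF //; lia.
Qed.

Lemma suf_full k F : fsize F <= k -> suf k F = [::].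
Proof. by move=> h; apply: fsize0; rewrite fsize_suf; lia. Qed.

Lemma pre0 F : pre 0 F = [::].
Proof. by apply: fsize0; rewrite fsize_pre min0n. Qed.

Lemma suf0 F : suf 0 F = F.
Proof. by elim/forest_ind: F => [|C F IHC IHF] //; rewrite sufE ltn0 IHC. Qed.

Lemma pre_pre a b F : pre b (pre a F) = pre (minn a b) F.
Proof.
elim/forest_ind: F a b => [|C F IHC IHF] a b //.
rewrite [pre a _]preE [pre (minn a b) _]preE.
case: ifP => ha; [rewrite preE|]; case: ifP => hb; try (case: ifP => hm; try lia).
- by rewrite IHF; do 2 f_equal; lia.
- by f_equal; lia.
- lia.
- by rewrite IHC.
Qed.

Lemma suf_suf a b F : suf a (suf b F) = suf (b + a) F.
Proof.
elim/forest_ind: F a b => [|C F IHC IHF] a b //.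
rewrite [suf b _]sufE [suf (b + a) _]sufE.
case: ifP => hb; case: ifP => hm //; try lia.
- by rewrite IHF; f_equal; lia.
- rewrite sufE fsize_suf; case: ifP => h; try lia.
  by f_equal; lia.
- by rewrite sufE fsize_suf; case: ifP => h; try lia; rewrite IHC.
Qed.

Lemma pre_suf r a F : pre r (suf a F) = suf a (pre (a + r) F).
Proof.
elim/forest_ind: F r a => [|C F IHC IHF] r a //.
rewrite [suf a _]sufE [pre (a + r) _]preE.
case: ifP => ha; case: ifP => hm; try lia.
- rewrite IHF sufE; case: ifP => h; try lia.
  by have -> : a + r - (fsize C).+1 = a - (fsize C).+1 + r by lia.
- rewrite preE fsize_suf sufE; case: ifP => h; try lia; case: ifP => h'; try lia.
  by have -> : r - (fsize C - a).+1 = a + r - (fsize C).+1 by lia.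
- by rewrite preE fsize_suf; case: ifP => h; try lia; rewrite IHC.
Qed.

Definition rf (P : nat -> bool) (o : nat) (F : seq tree) : seq tree :=
  (fix go (o : nat) (ts : seq tree) : seq tree :=
    match ts with
    | [::] => [::]
    | t' :: ts' => restr P o t' ++ go (o + tsize t') ts'
    end) o F.

Lemma rf_nil P o : rf P o [::] = [::]. Proof. by []. Qed.
Lemma rf_cons P o t F : rf P o (t :: F) = restr P o t ++ rf P (o + tsize t) F.
Proof. by []. Qed.
Lemma restr_node P o C :
  restr P o (Node C) = if P (o + fsize C) then [:: Node (rf P o C)] else rf P o C.
Proof. by []. Qed.

Definition gf (g : nat -> seq tree) (o : nat) (F : seq tree) : seq tree :=
  (fix go (o : nat) (ts : seq tree) : seq tree :=
    match ts with
    | [::] => [::]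
    | t' :: ts' => graft g o t' :: go (o + tsize t') ts'
    end) o F.
Lemma gf_nil g o : gf g o [::] = [::]. Proof. by []. Qed.
Lemma gf_cons g o t F : gf g o (t :: F) = graft g o t :: gf g (o + tsize t) F.
Proof. by []. Qed.
Lemma graft_node g o C : graft g o (Node C) = Node (gf g o C ++ g (o + fsize C)).
Proof. by []. Qed.

Lemma rf_int F o a b P :
  (forall p, o <= p < o + fsize F -> P p = (o + a <= p) && (p < o + b)) ->
  rf P o F = suf a (pre b F).
Proof.
elim/forest_ind: F o a b P => [|C F IHC IHF] o a b P HP //.
rewrite rf_cons restr_node tsizeE.
have HC : rf P o C = suf a (pre b C).
  apply: IHC => p hp; apply: HP; rewrite fsize_cons tsizeE; lia.
have HF : rf P (o + (fsize C).+1) F = suf (a - (fsize C).+1) (pre (b - (fsize C).+1) F).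
  apply: IHF => p hp; rewrite HP; last by rewrite fsize_cons tsizeE; lia.
  apply/idP/idP => /andP [h1 h2]; apply/andP; split; lia.
rewrite HC HF HP; last by rewrite fsize_cons tsizeE; lia.
rewrite preE.
case: (ltnP (fsize C) b) => hb.
- rewrite sufE; case: (ltnP (fsize C) a) => ha.
  + rewrite ifF; last lia.
    by rewrite suf_full // fsize_pre; lia.
  + rewrite ifT; last lia.
    have -> : a - (fsize C).+1 = 0 by lia.
    rewrite pre_full //; last lia.
    by rewrite suf0.
- rewrite ifF; last lia.
  have -> : b - (fsize C).+1 = 0 by lia.
  by rewrite pre0 suf_nil cats0.
Qed.

Lemma degE C : deg (Node C) = fsize C. Proof. by []. Qed.

Lemma tintE C a b : a <= b <= fsize C ->
  tint (Node C) a.+1 b = Node (suf a (pre b C)).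
Proof.
move=> /andP [hab hb]; rewrite /tint degE.
have -> : maxn a.+1 1 = a.+1 by lia.
have -> : minn b (fsize C) = b by lia.
case: (ltnP a b) => h /=.
- rewrite /restrict degE restr_node add0n eqxx /=; congr Node.
  apply: rf_int => p hp; rewrite add0n.
  have -> : (p == fsize C) = false by apply/eqP; lia.
  apply/idP/idP => /andP [h1 h2]; apply/andP; split; lia.
- have -> : a = b by lia.
  by rewrite suf_full // fsize_pre; lia.
Qed.

Lemma tint1 C k : k <= fsize C -> tint (Node C) 1 k = Node (pre k C).
Proof. by move=> h; rewrite tintE ?suf0 //; lia. Qed.

Lemma tintS C a : a <= fsize C -> tint (Node C) a.+1 (fsize C) = Node (suf a C).
Proof. by move=> h; rewrite tintE ?pre_full //; lia. Qed.

Definition Sg (g : nat -> seq tree) (o N : nat) : nat :=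
  sumn [seq fsize (g p) | p <- iota o N].

Lemma S_add g o a b : Sg g o (a + b) = Sg g o a + Sg g (o + a) b.
Proof. by rewrite /Sg iotaD map_cat sumn_cat. Qed.
Lemma S0 g o : Sg g o 0 = 0. Proof. by []. Qed.
Lemma S1 g o : Sg g o 1 = fsize (g o). Proof. by rewrite /Sg /= addn0. Qed.
Lemma fsize_cat A B : fsize (A ++ B) = fsize A + fsize B.
Proof. by rewrite /fsize map_cat sumn_cat. Qed.

Definition X g o F := gf g o F ++ g (o + fsize F).

Lemma X_cons g o t F : X g o (t :: F) = graft g o t :: X g (o + tsize t) F.
Proof. by rewrite /X gf_cons fsize_cons addnA. Qed.
Lemma X_nil g o : X g o [::] = g o. Proof. by rewrite /X addn0. Qed.
Lemma graftX g o C : graft g o (Node C) = Node (X g o C). Proof. by []. Qed.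

Lemma fsize_gf g o F : fsize (gf g o F) = fsize F + Sg g o (fsize F).
Proof.
elim/forest_ind: F o => [|C F IHC IHF] o //.
rewrite gf_cons graft_node !fsize_cons tsizeE fsize_cat IHC IHF.
rewrite (S_add g o (tsize (Node C)) (fsize F)) tsizeE -(addn1 (fsize C)).
rewrite (S_add g o (fsize C) 1) S1; lia.
Qed.

Lemma fsize_X g o F : fsize (X g o F) = fsize F + Sg g o (fsize F).+1.
Proof. by rewrite /X fsize_cat fsize_gf -addn1 (S_add g o (fsize F) 1) S1; lia. Qed.

Lemma tsize_graft g o C : tsize (graft g o (Node C)) = (fsize C).+1 + Sg g o (fsize C).+1.
Proof. by rewrite graftX tsizeE fsize_X. Qed.

Lemma gf_congr g1 g2 o F : (forall p, o <= p < o + fsize F -> g1 p = g2 p) ->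
  gf g1 o F = gf g2 o F.
Proof.
elim/forest_ind: F o => [|C F IHC IHF] o H //.
rewrite !gf_cons !graft_node IHC ?IHF ?H //; rewrite ?fsize_cons ?tsizeE; try lia.
- move=> p hp; apply: H; rewrite fsize_cons tsizeE; lia.
- move=> p hp; apply: H; rewrite fsize_cons tsizeE; lia.
Qed.

Lemma X_congr g1 g2 o F : (forall p, o <= p <= o + fsize F -> g1 p = g2 p) ->
  X g1 o F = X g2 o F.
Proof.
move=> H; rewrite /X (@gf_congr g1 g2) ?H //; try lia.
move=> p hp; apply: H; lia.
Qed.

Lemma gf_shift g d o F : gf g (d + o) F = gf (fun p => g (d + p)) o F.
Proof.
elim/forest_ind: F o => [|C F IHC IHF] o //.
by rewrite !gf_cons !graft_node IHC -!addnA IHF.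
Qed.

Lemma X_shift g d F : X g d F = X (fun p => g (d + p)) 0 F.
Proof. by rewrite /X -{1}(addn0 d) gf_shift add0n. Qed.

Lemma gf_empty o F : gf (fun _ => [::]) o F = F.
Proof.
elim/forest_ind: F o => [|C F IHC IHF] o //.
by rewrite gf_cons graft_node IHC IHF cats0.
Qed.

Lemma graft_empty g t : (forall p, g p = [::]) -> graft g 0 t = t.
Proof.
case: t => C H; rewrite graftX /X (@gf_congr g (fun _ => [::])) ?H ?gf_empty ?cats0 //.
Qed.

Definition upd (g : nat -> seq tree) (a : nat) (x : seq tree) : nat -> seq tree :=
  fun p => if p == a then x else g p.

Lemma DL g F off i r : i <= fsize F -> r <= fsize (g (off + i)) ->
  pre (i + Sg g off i + r) (X g off F) = gf g off (pre i F) ++ pre r (g (off + i)) /\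
  suf (i + Sg g off i + r) (X g off F) =
    X (upd g (off + i) (suf r (g (off + i)))) (off + i) (suf i F).
Proof.
elim/forest_ind: F off i r => [|C F IHC IHF] off i r.
  rewrite fsize_cons0 leqn0 => /eqP -> hr.
  rewrite X_nil S0 !addn0 add0n pre_nil suf_nil X_nil /upd eqxx; split => //.
rewrite fsize_cons tsizeE => hi hr.
rewrite X_cons graftX preE sufE fsize_X tsizeE.
case: (ltnP (fsize C) i) => hiC.
- have hsum : Sg g off i = Sg g off (fsize C).+1 + Sg g (off + (fsize C).+1) (i - (fsize C).+1).
    by rewrite -S_add; congr Sg; lia.
  have -> : (fsize C + Sg g off (fsize C).+1).+1 <= i + Sg g off i + r = true by lia.
  have -> : i + Sg g off i + r - (fsize C + Sg g off (fsize C).+1).+1 =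
     (i - (fsize C).+1) + Sg g (off + (fsize C).+1) (i - (fsize C).+1) + r by lia.
  have hoff : off + (fsize C).+1 + (i - (fsize C).+1) = off + i by lia.
  have hr' : r <= fsize (g (off + (fsize C).+1 + (i - (fsize C).+1))) by rewrite hoff.
  have hi' : i - (fsize C).+1 <= fsize F by lia.
  have [h1 h2] := IHF (off + (fsize C).+1) (i - (fsize C).+1) r hi' hr'.
  rewrite hoff in h1 h2.
  rewrite h1 h2 preE sufE ifT; last lia.
  rewrite ifT; last lia.
  by rewrite gf_cons graftX tsizeE.
- have hsum : Sg g off (fsize C).+1 =
     Sg g off i + fsize (g (off + i)) + Sg g (off + i).+1 (fsize C - i).
    rewrite [in LHS](_ : (fsize C).+1 = i + 1 + (fsize C - i)); last lia.
    by rewrite !S_add S1 addnA addn1.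
  have -> : (fsize C + Sg g off (fsize C).+1).+1 <= i + Sg g off i + r = false by lia.
  have [h1 h2] := IHC off i r hiC hr.
  rewrite h1 h2 preE sufE ifF; last lia.
  rewrite ifF; last lia.
  rewrite X_cons graftX tsizeE fsize_suf.
  have -> : off + i + (fsize C - i).+1 = off + (fsize C).+1 by lia.
  split => //; congr (_ :: _); apply: X_congr => p hp; rewrite /upd ifF //; apply/eqP; lia.
Qed.

Lemma count_lt0 (s : seq nat) : count (fun f => f < 0) s = 0.
Proof. by elim: s. Qed.

Lemma count_ltS (s : seq nat) p :
  count (fun f => f < p.+1) s = count (fun f => f < p) s + count_mem p s.
Proof.
by elim: s => //= x s ->; case: (ltngtP x p) => h /=; try lia.
Qed.

Lemma count_ltS_sorted (s : seq nat) p : sorted ltn s ->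
  count (fun f => f < p.+1) s = count (fun f => f < p) s + (p \in s).
Proof.
move=> hs; rewrite count_ltS count_uniq_mem //.
by apply: sorted_uniq hs; [apply: ltn_trans | apply: ltnn].
Qed.

Lemma count_lt_index (s : seq nat) p : sorted ltn s -> p \in s ->
  count (fun f => f < p) s = index p s.
Proof.
elim: s => //= x s IH hs; rewrite in_cons.
have hall := order_path_min ltn_trans hs.
have hs' : sorted ltn s := path_sorted hs.
case: eqVneq => [->|hne] /= hp.
- rewrite ?eqxx ltnn /=.
  rewrite (eq_in_count (a2 := pred0)) ?count_pred0 // => y hy.
  by move/allP: hall => /(_ y hy) /=; lia.
- have hxp : x < p by move/allP: hall => /(_ p hp).
  by rewrite hxp IH.
Qed.

Definition gc (c : nat -> nat) (V : seq tree) (p : nat) : seq tree :=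
  suf (c p) (pre (c p.+1) V).

Definition validc (m n : nat) (c : nat -> nat) : Prop :=
  [/\ c 0 = 0, c m.+1 = n & forall p, p <= m -> c p <= c p.+1].

Lemma validc_mono m n c : validc m n c -> forall p q, p <= q <= m.+1 -> c p <= c q.
Proof.
case=> _ _ hm p; elim=> [|q IH] h; first by have -> : p = 0 by lia.
case: (ltnP p q.+1) => h'; last by have -> : p = q.+1 by lia.
apply: leq_trans (IH _) (hm _ _); lia.
Qed.

Lemma fsize_gc m c V p : validc m (fsize V) c -> p <= m ->
  fsize (gc c V p) = c p.+1 - c p.
Proof.
move=> hv hp; have := validc_mono hv (p := p.+1) (q := m.+1).
case: hv => _ hn _ h; rewrite /gc fsize_suf fsize_pre; rewrite hn in h.
have := h ltac:(lia); lia.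
Qed.

Lemma Sg_gc m c V i : validc m (fsize V) c -> i <= m.+1 -> Sg (gc c V) 0 i = c i.
Proof.
move=> hv; elim: i => [|i IH] hi; first by case: hv.
rewrite -addn1 S_add S1 add0n IH; last lia.
rewrite (fsize_gc hv); last lia.
have := validc_mono hv (p := i) (q := i.+1); rewrite addn1; lia.
Qed.

Definition cf (ns fs : seq nat) (p : nat) : nat :=
  nth 0 (0 :: ns) (count (fun f => f < p) fs).

Lemma nth_mono (ns : seq nat) i j : sorted ltn (0 :: ns) -> i <= j -> j <= size ns ->
  nth 0 (0 :: ns) i <= nth 0 (0 :: ns) j.
Proof.
move=> hs hij hj.
have hs' : sorted leq (0 :: ns) by apply: sub_sorted hs => a b /ltnW.
by apply: (sorted_leq_nth leq_trans leqnn) => //; rewrite inE /=; lia.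
Qed.

Lemma hash_g D ns fs p : sorted ltn (0 :: ns) -> last 0 ns = fsize D ->
  sorted ltn fs -> size fs = size ns ->
  (if index p fs < size fs then children (nth odot (blocks (Node D) ns) (index p fs))
   else [::]) = gc (cf ns fs) D p.
Proof.
move=> hns hl hfs hsz; rewrite /gc /cf count_ltS_sorted // index_mem.
have hlast : nth 0 (0 :: ns) (size ns) = fsize D.
  by rewrite -hl -[size ns]/((size (0 :: ns)).-1) nth_last.
case: ifP => hp.
- have hi : index p fs < size ns by rewrite -hsz index_mem.
  rewrite count_lt_index // addn1 /blocks (nth_pairmap 0 odot _ hi).
  rewrite tintE //.
  have h1 := nth_mono hns (leqnSn (index p fs)) hi.
  have h2 := nth_mono hns hi (leqnn (size ns)).
  rewrite hlast /= in h2 *; apply/andP; split => //.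
- rewrite addn0 suf_full // fsize_pre; lia.
Qed.

Lemma cf_valid C D ns fs : valid_cuts (fsize D) ns -> valid_map (Node C) (size ns) fs ->
  validc (fsize C) (fsize D) (cf ns fs).
Proof.
case/and3P => hn hns /eqP hl; case/and3P => /eqP hsz hfs hall.
split.
- by rewrite /cf count_lt0.
- rewrite /cf.
  have -> : count (fun f => f < (fsize C).+1) fs = size ns.
    by rewrite -hsz; apply/eqP; rewrite -all_count.
  by rewrite -hl -[size ns]/((size (0 :: ns)).-1) nth_last.
- move=> p hp; rewrite /cf; apply: nth_mono => //.
  + by rewrite count_ltS; lia.
  + by rewrite -hsz count_size.
Qed.

Definition jfs (c : nat -> nat) N := filter (fun p => c p < c p.+1) (iota 0 N).
Definition jns (c : nat -> nat) N := map (fun p => c p.+1) (jfs c N).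

Lemma jumps_sorted m n c N : validc m n c -> N <= m.+1 ->
  sorted ltn (0 :: jns c N) /\ last 0 (jns c N) = c N.
Proof.
move=> hv; elim: N => [|N IH] hN; first by case: hv => ->.
have [IH1 IH2] := IH ltac:(lia).
rewrite /jns /jfs -addn1 iotaD filter_cat map_cat add0n /=.
case: ifP => hj /=.
- rewrite cats1 /= rcons_path last_rcons addn1.
  move: IH1 => /= ->; rewrite IH2 hj; by [].
- rewrite cats0 IH2 addn1; split => //.
  case: hv => _ _ hm; have := hm N ltac:(lia); move/negbT: hj; lia.
Qed.

Lemma jfs_sorted c N : sorted ltn (jfs c N).
Proof. by apply: sorted_filter; [apply: ltn_trans | apply: iota_ltn_sorted]. Qed.

Lemma cf_eq m n c p : validc m n c -> p <= m.+1 ->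
  cf (jns c m.+1) (jfs c m.+1) p = c p.
Proof.
move=> hv; elim: p => [|p IH] hp; first by rewrite /cf count_lt0; case: hv.
have hmem : (p \in jfs c m.+1) = (c p < c p.+1).
  by rewrite /jfs mem_filter mem_iota; apply/idP/idP => [/andP [] //|->]; apply/andP; split => //; lia.
rewrite /cf count_ltS_sorted ?jfs_sorted // hmem.
case hj: (c p < c p.+1).
- rewrite count_lt_index ?jfs_sorted ?hmem // addn1 /=.
  have hi : index p (jfs c m.+1) < size (jfs c m.+1) by rewrite index_mem hmem.
  by rewrite /jns (nth_map 0) // nth_index // hmem.
- rewrite addn0 -/(cf _ _ p) IH; last lia.
  case: hv => _ _ hm; have := hm p ltac:(lia); move/negbT: hj; lia.
Qed.

Lemma is_hash_c C D w : is_hash (Node C) (Node D) w <->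
  exists c, validc (fsize C) (fsize D) c /\ w = graft (gc c D) 0 (Node C).
Proof.
split.
- case=> [[h0 ->]|[ns [fs [hns [hfs ->]]]]].
  + exists (fun _ => 0); split; first by split.
    by rewrite graft_empty // => p; rewrite /gc pre0.
  + exists (cf ns fs); split; first exact: cf_valid.
    rewrite /hash_prod !graftX; congr Node; apply: X_congr => p _.
    case/and3P: hns => _ hs /eqP hl; case/and3P: hfs => /eqP hsz hf _.
    exact: hash_g.
- case=> c [hv ->].
  case: (posnP (fsize D)) => hD.
  + left; split => //.
    by rewrite graft_empty // => p; rewrite (fsize0 hD) /gc.
  + right; exists (jns c (fsize C).+1), (jfs c (fsize C).+1).
    have [hs hl] := jumps_sorted hv (leqnn _).
    have hl' : last 0 (jns c (fsize C).+1) = fsize D by rewrite hl; case: hv.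
    split; first by apply/and3P; split => //; apply/eqP.
    split.
      apply/and3P; split; first by rewrite /jns size_map.
        exact: jfs_sorted.
      by apply/allP => p; rewrite /jfs mem_filter mem_iota => /andP [_ /andP [_]].
    rewrite /hash_prod !graftX; congr Node; apply: X_congr => p hp.
    rewrite hash_g //; first last.
    * by rewrite /jns size_map.
    * exact: jfs_sorted.
    rewrite /gc !(cf_eq hv) //; lia.
Qed.

Lemma split_k m n c k : validc m n c -> k <= m + n ->
  exists i r, [/\ i <= m, r <= c i.+1 - c i & k = i + c i + r].
Proof.
move=> hv hk.
suff H : forall N, N <= m -> k <= N + c N.+1 ->
  exists i r, [/\ i <= N, r <= c i.+1 - c i & k = i + c i + r].
  have [i [r [h1 h2 h3]]] := H m (leqnn m) ltac:(by case: hv => _ -> _).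
  by exists i, r; split.
elim=> [|N IH] hN hkN.
- exists 0, k; case: hv => h0 _ _; rewrite h0; split => //; lia.
- case: (leqP k (N + c N.+1)) => h.
  + have [i [r [h1 h2 h3]]] := IH ltac:(lia) h.
    by exists i, r; split => //; lia.
  + exists N.+1, (k - N.+1 - c N.+1); split => //; lia.
Qed.

Lemma part1 U V w : is_hash (Node U) (Node V) w -> forall k, k <= fsize U + fsize V ->
  exists i j w1 w2, [/\ i <= fsize U, j <= fsize V,
       is_hash (tint (Node U) 1 i) (tint (Node V) 1 j) w1,
       is_hash (tint (Node U) i.+1 (fsize U)) (tint (Node V) j.+1 (fsize V)) w2 &
       (tint w 1 k, tint w k.+1 (fsize U + fsize V)) = (w1, w2)].
Proof.
move=> /is_hash_c [c [hv ->]] k hk.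
set g := gc c V.
have hdeg : fsize (X g 0 U) = fsize U + fsize V.
  by rewrite fsize_X (Sg_gc hv) //; case: hv => _ -> _.
have [i [r [hi hr hk']]] := split_k hv hk.
have hmono := validc_mono hv.
have hcn : c (fsize U).+1 = fsize V by case: hv.
have hr' : r <= fsize (g (0 + i)) by rewrite add0n (fsize_gc hv).
have [hp hs] := @DL g U 0 i r hi hr'.
have hSi : Sg g 0 i = c i by apply: (Sg_gc hv); lia.
rewrite hSi in hp hs.
rewrite -hk' in hp hs.
have hci : c i <= c i.+1 by apply: hmono; lia.
have hcn' : c i.+1 <= fsize V by rewrite -hcn; apply: hmono; lia.
set j := c i + r.
exists i, j, (tint (graft g 0 (Node U)) 1 k),
  (tint (graft g 0 (Node U)) k.+1 (fsize U + fsize V)).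
split => //.
- rewrite /j; lia.
- have hkX : k <= fsize (X g 0 U) by rewrite hdeg.
  have hjV : j <= fsize V by rewrite /j; lia.
  rewrite graftX (tint1 hkX) (tint1 hi) (tint1 hjV).
  apply/is_hash_c; exists (fun p => minn (c p) j); split.
  + rewrite !fsize_pre; split.
    * by case: hv => -> _ _; rewrite min0n.
    * have -> : minn i (fsize U) = i by lia.
      rewrite /j; lia.
    * move=> p hp'; have := hmono p p.+1; lia.
  + rewrite hp graftX /X fsize_pre add0n.
    have -> : minn i (fsize U) = i by lia.
    congr (Node (_ ++ _)).
    * apply: gf_congr => p; rewrite add0n fsize_pre => hp'.
      rewrite /g /gc pre_pre.
      have h1 := hmono p.+1 i ltac:(lia); have h2 := hmono p p.+1 ltac:(lia).
      congr (suf _ (pre _ _)); rewrite /j; lia.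
    * rewrite /g /gc pre_suf !pre_pre add0n.
      congr (suf _ (pre _ _)); rewrite /j; lia.
- have hkX : k <= fsize (X g 0 U) by rewrite hdeg.
  have hjV : j <= fsize V by rewrite /j; lia.
  rewrite graftX -hdeg (tintS hkX) (tintS hi) (tintS hjV).
  rewrite hs X_shift.
  apply/is_hash_c; exists (fun p => c (p + i) - j); split.
  + rewrite !fsize_suf; split.
    * rewrite add0n /j; lia.
    * have -> : (fsize U - i).+1 + i = (fsize U).+1 by lia.
      by rewrite hcn.
    * move=> p hp'; have := hmono (p + i) (p.+1 + i); lia.
  + rewrite graftX; congr Node; apply: X_congr => p; rewrite add0n fsize_suf => hp'.
    rewrite /upd /g /gc.
    case: eqP => hpi.
    * have -> : p = 0 by lia.
      rewrite !add0n add1n pre_suf suf_suf.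
      have -> : c i - j = 0 by rewrite /j; lia.
      by rewrite suf0; congr (suf _ (pre _ _)); rewrite /j; lia.
    * have h1 := hmono i.+1 (p + i) ltac:(lia).
      have h2 := hmono (p + i) (p + i).+1 ltac:(lia).
      rewrite !add0n (addnC i p) addSn pre_suf suf_suf.
      congr (suf _ (pre _ _)); rewrite /j; lia.
Qed.

Lemma part2 U V i j w1 w2 : i <= fsize U -> j <= fsize V ->
  is_hash (tint (Node U) 1 i) (tint (Node V) 1 j) w1 ->
  is_hash (tint (Node U) i.+1 (fsize U)) (tint (Node V) j.+1 (fsize V)) w2 ->
  exists w, is_hash (Node U) (Node V) w /\
    (w1, w2) = (tint w 1 (i + j), tint w (i + j).+1 (fsize U + fsize V)).
Proof.
move=> hi hj; rewrite (tint1 hi) (tint1 hj) (tintS hi) (tintS hj).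
move=> /is_hash_c [c1 [hv1 ->]] /is_hash_c [c2 [hv2 ->]].
rewrite !fsize_pre in hv1; rewrite !fsize_suf in hv2.
have e1 : minn i (fsize U) = i by lia.
have e2 : minn j (fsize V) = j by lia.
rewrite e1 e2 in hv1.
have hm1 := validc_mono hv1; have hm2 := validc_mono hv2.
case: hv1 => h10 h1i h1m; case: hv2 => h20 h2n h2m.
pose c p := if p <= i then c1 p else j + c2 (p - i).
have hc1i : c1 i <= j by rewrite -h1i; apply: h1m.
have hv : validc (fsize U) (fsize V) c.
  split.
  - by rewrite /c leq0n.
  - rewrite /c ifF; last lia.
    have -> : (fsize U).+1 - i = (fsize U - i).+1 by lia.
    rewrite h2n; lia.
  - move=> p hp; rewrite /c.
    case: ifP => ha; case: ifP => hb; try lia.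
    + by apply: h1m; lia.
    + have -> : p = i by lia.
      lia.
    + have -> : p.+1 - i = (p - i).+1 by lia.
      have := h2m (p - i) ltac:(lia); lia.
set g := gc c V.
exists (graft g 0 (Node U)); split.
  by apply/is_hash_c; exists c.
have hmono := validc_mono hv.
set r := j - c1 i.
have hci : c i = c1 i by rewrite /c leqnn.
have hci1 : c i.+1 = j + c2 1 by rewrite /c ifF ?subSnn //; lia.
have hr' : r <= fsize (g (0 + i)).
  rewrite add0n (fsize_gc hv) // hci hci1 /r; lia.
have [hp hs] := @DL g U 0 i r hi hr'.
have hSi : Sg g 0 i = c i by apply: (Sg_gc hv); lia.
rewrite hSi in hp hs.
have hk : i + c i + r = i + j by rewrite hci /r; lia.
rewrite hk in hp hs.
have hdeg : fsize (X g 0 U) = fsize U + fsize V.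
  by rewrite fsize_X (Sg_gc hv) //; case: hv => _ -> _.
have hkX : i + j <= fsize (X g 0 U) by rewrite hdeg; lia.
rewrite [graft g 0 _]graftX -hdeg (tint1 hkX) (tintS hkX) hp hs.
congr (_, _).
- rewrite graftX /X fsize_pre e1 add0n; congr (Node (_ ++ _)).
  + apply: gf_congr => p; rewrite add0n fsize_pre e1 => hp'.
    rewrite /g /gc pre_pre /c ifT ?ifT; try lia.
    have := h1m p.+1 ltac:(lia); have := hm1 p.+1 i.+1 ltac:(lia).
    by move=> ? ?; congr (suf _ (pre _ _)); lia.
  + rewrite /g /gc pre_suf !pre_pre hci hci1 /r.
    by congr (suf _ (pre _ _)); lia.
- rewrite graftX [X _ (0 + i) _]X_shift; congr Node; apply: X_congr => p; rewrite add0n fsize_suf => hp'.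
  rewrite /upd /g /gc.
  case: eqP => hpi.
  + have -> : p = 0 by lia.
    rewrite !add0n h20 suf0 pre_suf suf_suf hci hci1 /r.
    by congr (suf _ (pre _ _)); lia.
  + rewrite !add0n /c ifF ?ifF; try lia.
    have -> : i + p - i = p by lia.
    have -> : (i + p).+1 - i = p.+1 by lia.
    by rewrite pre_suf suf_suf.
Qed.

Theorem lemma3p6 (u v : tree) :
  let m := deg u in let n := deg v in
  (forall w, is_hash u v w -> forall k, k <= m + n ->
     exists i j w1 w2, [/\ i <= m, j <= n,
       is_hash (tint u 1 i) (tint v 1 j) w1,
       is_hash (tint u i.+1 m) (tint v j.+1 n) w2 &
       (tint w 1 k, tint w k.+1 (m + n)) = (w1, w2)])
  /\
  (forall i j w1 w2, i <= m -> j <= n ->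
     is_hash (tint u 1 i) (tint v 1 j) w1 ->
     is_hash (tint u i.+1 m) (tint v j.+1 n) w2 ->
     exists w, is_hash u v w /\
       (w1, w2) = (tint w 1 (i + j), tint w (i + j).+1 (m + n))).
Proof.
case: u => U; case: v => V /=; rewrite !degE; split.
- exact: part1.
- exact: part2.
Qed.
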